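(* Let $\nu$ be a measure on $\mathcal B(\mathbb R)^U$ satisfying $\int_{\mathbb R^U}1\wedge|\pi_u(x)|^2\,\nu(dx)<\infty$ for all $u\in U$. Then $\nu$ does not charge zero if and only if $\nu$ is $\sigma$-finite and for every $A\in\mathcal B(\mathbb R)^U$ there exists a countable $U_A\subset U$ such that $\nu(A)=\nu(A\setminus\pi_{U_A}^{-1}(0^{U_A}))$.
   Context: $U$ is a non-empty index set, $\mathcal B(\mathbb R)^U$ the cylindrical (product) $\sigma$-algebra on $\mathbb R^U$, $\pi_V\colon\mathbb R^U\to\mathbb R^V$ the coordinate projection for $V\subset U$ ($\pi_u$ for $V=\{u\}$), $0^V$ the zero element of $\mathbb R^V$. A measure $\nu$ on $\mathcal B(\mathbb R)^U$ does not charge zero if there exists a countable $U_0\subset U$ with $\nu(\pi_{U_0}^{-1}(0^{U_0}))=0$. *)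

(* Defs.v *)
From Stdlib Require Import Reals List.
Open Scope R_scope.

Definition set (X : Type) := X -> Prop.

(* Extended reals (used for measure values, which are in [0, +oo]). *)
Inductive Rbar : Type := Fin (r : R) | PInf.

Definition Rbar_le (a b : Rbar) : Prop :=
  match a, b with
  | _, PInf => True
  | PInf, Fin _ => False
  | Fin x, Fin y => x <= y
  end.

Definition Rbar_plus (a b : Rbar) : Rbar :=
  match a, b with
  | Fin x, Fin y => Fin (x + y)
  | _, _ => PInf
  end.

(* scaling by a strictly positive real *)
Definition Rbar_scale (c : R) (a : Rbar) : Rbar :=
  match a with Fin x => Fin (c * x) | PInf => PInf end.

Definition is_sup_Rbar (P : Rbar -> Prop) (l : Rbar) : Prop :=
  (forall y, P y -> Rbar_le y l) /\
  (forall b, (forall y, P y -> Rbar_le y b) -> Rbar_le l b).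

Fixpoint Rbar_psum (f : nat -> Rbar) (n : nat) : Rbar :=
  match n with
  | O => Fin 0
  | S k => Rbar_plus (Rbar_psum f k) (f k)
  end.

Definition Rbar_series (f : nat -> Rbar) (l : Rbar) : Prop :=
  is_sup_Rbar (fun y => exists n, y = Rbar_psum f n) l.

Inductive sigma_gen {X : Type} (G : set (set X)) : set (set X) :=
  | sg_base : forall A, G A -> sigma_gen G A
  | sg_empty : sigma_gen G (fun _ => False)
  | sg_compl : forall A, sigma_gen G A -> sigma_gen G (fun x => ~ A x)
  | sg_union : forall A : nat -> set X,
      (forall n, sigma_gen G (A n)) -> sigma_gen G (fun x => exists n, A n x).

Definition borel : set (set R) :=
  sigma_gen (fun A => exists a b : R, A = (fun x => a < x < b)).

(* Cylindrical (product) sigma-algebra B(R)^U on R^U = U -> R *)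
Definition cyl_sigma (U : Type) : set (set (U -> R)) :=
  sigma_gen (fun A => exists (u : U) (B : set R), borel B /\ A = (fun x => B (x u))).

Definition is_measure {X : Type} (M : set (set X)) (mu : set X -> Rbar) : Prop :=
  mu (fun _ => False) = Fin 0 /\
  (forall A, M A -> Rbar_le (Fin 0) (mu A)) /\
  (forall A : nat -> set X,
     (forall n, M (A n)) ->
     (forall n m, n <> m -> forall x, A n x -> A m x -> False) ->
     Rbar_series (fun n => mu (A n)) (mu (fun x => exists n, A n x))).

Definition sigma_finite {X : Type} (M : set (set X)) (mu : set X -> Rbar) : Prop :=
  exists E : nat -> set X,
    (forall n, M (E n)) /\ (forall n, exists r, mu (E n) = Fin r) /\
    (forall x, exists n, E n x).

(* Nonnegative simple functions s = sum_i c_i 1_{A_i}, c_i > 0, A_i measurable,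
   pairwise disjoint, given as a list of pairs (c_i, A_i). *)
Fixpoint pw_disjoint {X : Type} (l : list (R * set X)) : Prop :=
  match l with
  | nil => True
  | p :: l' => (forall q, In q l' -> forall x, snd p x -> snd q x -> False)
               /\ pw_disjoint l'
  end.

Definition simple_fun {X : Type} (M : set (set X)) (l : list (R * set X)) : Prop :=
  (forall p, In p l -> 0 < fst p /\ M (snd p)) /\ pw_disjoint l.

(* s <= f pointwise (for disjoint A_i, s x = c_i on A_i and 0 elsewhere) *)
Definition simple_le {X : Type} (l : list (R * set X)) (f : X -> R) : Prop :=
  (forall x, 0 <= f x) /\ (forall p, In p l -> forall x, snd p x -> fst p <= f x).

Definition simple_integral {X : Type} (mu : set X -> Rbar) (l : list (R * set X)) : Rbar :=
  fold_right (fun p acc => Rbar_plus (Rbar_scale (fst p) (mu (snd p))) acc) (Fin 0) l.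

(* The (Lebesgue) integral of the nonnegative function f w.r.t. mu, defined as the
   supremum of the integrals of simple functions below f, is finite. *)
Definition integral_finite {X : Type} (M : set (set X)) (mu : set X -> Rbar)
  (f : X -> R) : Prop :=
  exists K : R, forall l, simple_fun M l -> simple_le l f ->
    Rbar_le (simple_integral mu l) (Fin K).

(* countable subset of U (possibly empty) *)
Definition countable_subset {U : Type} (C : set U) : Prop :=
  exists e : nat -> option U, forall u, C u <-> exists n, e n = Some u.

Definition zero_preimage {U : Type} (V : set U) : set (U -> R) :=
  fun x => forall u, V u -> x u = 0.

Definition does_not_charge_zero {U : Type} (nu : set (U -> R) -> Rbar) : Prop :=
  exists U0 : set U, countable_subset U0 /\ nu (zero_preimage U0) = Fin 0.

(* Main.v *)
Require Import Defs.
From Stdlib Require Import Reals List.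
From Stdlib Require Import Lra Lia Arith Cantor Classical FunctionalExtensionality PropExtensionality IndefiniteDescription.
Open Scope R_scope.

Lemma set_ext {X : Type} (A B : set X) : (forall x, A x <-> B x) -> A = B.
Proof. intro H; apply functional_extensionality; intro x; apply propositional_extensionality; auto. Qed.

Lemma sg_ext {X} (G : set (set X)) A B : sigma_gen G A -> (forall x, A x <-> B x) -> sigma_gen G B.
Proof. intros HA H; rewrite <- (set_ext _ _ H); exact HA. Qed.

Lemma sg_union2 {X} (G : set (set X)) A B : sigma_gen G A -> sigma_gen G B ->
  sigma_gen G (fun x => A x \/ B x).
Proof.
  intros HA HB.
  apply (sg_ext _ (fun x => exists n, (match n with O => A | _ => B end) x)).
  - apply sg_union; intros [|n]; auto.
  - intro x; split.
    + intros [[|n] H]; auto.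
    + intros [H|H]; [exists O|exists 1%nat]; auto.
Qed.

Lemma sg_inter2 {X} (G : set (set X)) A B : sigma_gen G A -> sigma_gen G B ->
  sigma_gen G (fun x => A x /\ B x).
Proof.
  intros HA HB.
  apply (sg_ext _ (fun x => ~ (~ A x \/ ~ B x))).
  - apply sg_compl, sg_union2; apply sg_compl; auto.
  - intro x; tauto.
Qed.

Lemma sg_diff {X} (G : set (set X)) A B : sigma_gen G A -> sigma_gen G B ->
  sigma_gen G (fun x => A x /\ ~ B x).
Proof. intros; apply sg_inter2; auto; apply sg_compl; auto. Qed.

Lemma Rbar_le_antisym a b : Rbar_le a b -> Rbar_le b a -> a = b.
Proof. destruct a, b; simpl; intros; try contradiction; auto. f_equal; lra. Qed.

Lemma Rbar_plus_0_r a : Rbar_plus a (Fin 0) = a.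
Proof. destruct a; simpl; auto. f_equal; lra. Qed.

Lemma Rbar_plus_0_l a : Rbar_plus (Fin 0) a = a.
Proof. destruct a; simpl; auto. f_equal; lra. Qed.

Lemma Rbar_le_plus_r a b : Rbar_le (Fin 0) b -> Rbar_le a (Rbar_plus a b).
Proof. destruct a, b; simpl; intros; auto; lra. Qed.

Lemma Rbar_le_plus_nonneg a b : Rbar_le (Fin 0) a -> Rbar_le (Fin 0) b -> Rbar_le (Fin 0) (Rbar_plus a b).
Proof. destruct a, b; simpl; intros; auto; lra. Qed.

Lemma sup_unique P l1 l2 : is_sup_Rbar P l1 -> is_sup_Rbar P l2 -> l1 = l2.
Proof. intros [H1 H1'] [H2 H2']. apply Rbar_le_antisym; auto. Qed.

Lemma sup_max (P : Rbar -> Prop) l : P l -> (forall y, P y -> Rbar_le y l) -> is_sup_Rbar P l.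
Proof. intros Hl Hu; split; auto. Qed.

Section Meas.
Context {X : Type} (G : set (set X)) (nu : set X -> Rbar) (Hnu : is_measure (sigma_gen G) nu).

Lemma nu_nonneg A : sigma_gen G A -> Rbar_le (Fin 0) (nu A).
Proof. destruct Hnu as [_ [H _]]; auto. Qed.

Lemma add2 A B : sigma_gen G A -> sigma_gen G B -> (forall x, A x -> B x -> False) ->
  nu (fun x => A x \/ B x) = Rbar_plus (nu A) (nu B).
Proof.
  intros HA HB Hd.
  destruct Hnu as [H0 [Hp Hc]].
  set (Sq := fun n => match n with O => A | 1%nat => B | _ => fun _ : X => False end).
  assert (HS : forall n, sigma_gen G (Sq n)).
  { intros [|[|n]]; simpl; auto. apply sg_empty. }
  assert (HD : forall n m, n <> m -> forall x, Sq n x -> Sq m x -> False).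
  { intros [|[|n]] [|[|m]] Hnm x; simpl; intros; try contradiction; eauto. }
  specialize (Hc Sq HS HD).
  assert (E : (fun x => exists n, Sq n x) = (fun x => A x \/ B x)).
  { apply set_ext; intro x; split.
    - intros [[|[|n]] Hx]; simpl in Hx; tauto.
    - intros [Hx|Hx]; [exists O|exists 1%nat]; auto. }
  rewrite E in Hc.
  assert (Hps : forall k, Rbar_psum (fun n => nu (Sq n)) (S (S k)) = Rbar_plus (nu A) (nu B)).
  { induction k.
    - cbn [Rbar_psum]. unfold Sq. rewrite Rbar_plus_0_l. reflexivity.
    - change (Rbar_plus (Rbar_psum (fun n => nu (Sq n)) (S (S k))) (nu (fun _ => False)) = Rbar_plus (nu A) (nu B)).
      rewrite IHk, H0, Rbar_plus_0_r. reflexivity. }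
  apply (sup_unique _ _ _ Hc).
  apply sup_max.
  - exists 2%nat. symmetry. apply (Hps O).
  - intros y [[|[|k]] ->].
    + cbn [Rbar_psum]. apply Rbar_le_plus_nonneg; auto.
    + cbn [Rbar_psum]. unfold Sq. rewrite Rbar_plus_0_l. apply Rbar_le_plus_r; auto.
    + rewrite Hps. destruct (Rbar_plus (nu A) (nu B)); simpl; auto; lra.
Qed.

Lemma split_meas A B : sigma_gen G A -> sigma_gen G B ->
  nu A = Rbar_plus (nu (fun x => A x /\ B x)) (nu (fun x => A x /\ ~ B x)).
Proof.
  intros HA HB.
  rewrite <- add2.
  - f_equal. apply set_ext; intro x; tauto.
  - apply sg_inter2; auto.
  - apply sg_diff; auto.
  - intros x; tauto.
Qed.

Lemma mono A B : sigma_gen G A -> sigma_gen G B -> (forall x, A x -> B x) -> Rbar_le (nu A) (nu B).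
Proof.
  intros HA HB Hs.
  rewrite (split_meas B A HB HA).
  replace (fun x => B x /\ A x) with A by (apply set_ext; intro x; split; [auto|tauto]).
  apply Rbar_le_plus_r. apply nu_nonneg. apply sg_diff; auto.
Qed.

Lemma le_zero A : Rbar_le (Fin 0) A -> Rbar_le A (Fin 0) -> A = Fin 0.
Proof. intros; apply Rbar_le_antisym; auto. Qed.

End Meas.

Lemma series_zero f l : (forall n, f n = Fin 0) -> Rbar_series f l -> l = Fin 0.
Proof.
  intros Hf Hs.
  assert (Hp : forall n, Rbar_psum f n = Fin 0).
  { induction n; simpl; auto. rewrite IHn, Hf. simpl. f_equal; lra. }
  apply (sup_unique _ _ _ Hs). apply sup_max.
  - exists O; reflexivity.
  - intros y [n ->]. rewrite Hp. simpl; lra.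
Qed.

Lemma borel_interval a b : borel (fun x => a < x < b).
Proof. apply sg_base. exists a, b. reflexivity. Qed.

Lemma borel_abs_gt c : borel (fun r => c < Rabs r).
Proof.
  apply (sg_ext _ (fun r => exists n, (c < r < c + INR n) \/ (- c - INR n < r < - c))).
  - apply sg_union; intro n. apply sg_union2; apply borel_interval.
  - intro r; split.
    + intros [n [H|H]].
      * pose proof (Rle_abs r); lra.
      * pose proof (Rle_abs (- r)); rewrite Rabs_Ropp in *; lra.
    + intro H. destruct (INR_unbounded (Rabs r - c)) as [n Hn]. exists n.
      unfold Rabs in *. destruct (Rcase_abs r); [right|left]; lra.
Qed.

Lemma cyl_meas (U : Type) (u : U) (B : set R) : borel B -> cyl_sigma U (fun x => B (x u)).
Proof. intro HB. apply sg_base. exists u, B. auto. Qed.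

Lemma zero_meas (U : Type) (V : set U) : countable_subset V -> cyl_sigma U (zero_preimage V).
Proof.
  intros [e He].
  apply (sg_ext _ (fun x => ~ exists n, (fun x => match e n with None => False | Some u => 0 < Rabs (x u) end) x)).
  - apply sg_compl, sg_union. intro n. destruct (e n) as [u|].
    + apply (cyl_meas U u (fun r => 0 < Rabs r)). apply borel_abs_gt.
    + apply sg_empty.
  - intro x; unfold zero_preimage; split.
    + intros H u Hu. apply He in Hu. destruct Hu as [n Hn].
      destruct (Req_dec (x u) 0) as [E|E]; auto. exfalso; apply H. exists n. rewrite Hn.
      apply Rabs_pos_lt; auto.
    + intros H [n Hn]. destruct (e n) as [u|] eqn:En; auto.
      rewrite (H u) in Hn. rewrite Rabs_R0 in Hn; lra.
      apply He. exists n; auto.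
Qed.

Lemma finite_of_le a r : Rbar_le a (Fin r) -> exists r', a = Fin r'.
Proof. destruct a; simpl; intros; [eauto|contradiction]. Qed.

Lemma fin_sum_zero a d : Rbar_le (Fin 0) a -> Fin d = Rbar_plus a (Fin d) -> a = Fin 0.
Proof. destruct a; simpl; intros H E; try discriminate. injection E; intro; f_equal; lra. Qed.

Lemma abs_finite (U : Type) (nu : set (U -> R) -> Rbar) (u : U) (k : nat)
  (Hint : integral_finite (cyl_sigma U) nu (fun x => Rmin 1 (Rsqr (Rabs (x u))))) :
  exists r, nu (fun x => / INR (S k) < Rabs (x u)) = Fin r.
Proof.
  destruct Hint as [K HK].
  set (c := / INR (S k)).
  assert (Hc0 : 0 < c) by (unfold c; apply Rinv_0_lt_compat, lt_0_INR; lia).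
  assert (Hc1 : c <= 1).
  { unfold c. rewrite <- Rinv_1. apply Rinv_le_contravar; try lra. apply (le_INR 1). lia. }
  specialize (HK ((c * c, fun x => c < Rabs (x u)) :: nil)).
  destruct (nu (fun x => c < Rabs (x u))) as [r|] eqn:E; [eauto|].
  exfalso.
  assert (Hs : simple_fun (cyl_sigma U) ((c * c, fun x => c < Rabs (x u)) :: nil)).
  { split.
    - intros p [<-|[]]. simpl. split. nra. apply (cyl_meas U u (fun r => c < Rabs r)), borel_abs_gt.
    - simpl. split; auto. }
  assert (Hl : simple_le ((c * c, fun x => c < Rabs (x u)) :: nil) (fun x => Rmin 1 (Rsqr (Rabs (x u))))).
  { split.
    - intro x. apply Rmin_glb; [lra|apply Rle_0_sqr].
    - intros p [<-|[]] x Hx. simpl in *. apply Rmin_glb. nra. unfold Rsqr. nra. }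
  specialize (HK Hs Hl). unfold simple_integral in HK. simpl in HK. rewrite E in HK. simpl in HK. exact HK.
Qed.

Theorem lemmaA2 (U : Type) (hU : inhabited U) (nu : set (U -> R) -> Rbar)
  (Hnu : is_measure (cyl_sigma U) nu)
  (Hint : forall u : U,
      integral_finite (cyl_sigma U) nu (fun x => Rmin 1 (Rsqr (Rabs (x u))))) :
  does_not_charge_zero nu <->
  (sigma_finite (cyl_sigma U) nu /\
   forall A, cyl_sigma U A ->
     exists UA : set U, countable_subset UA /\
       nu A = nu (fun x => A x /\ ~ zero_preimage UA x)).
Proof.
  unfold cyl_sigma in *.
  split.
  - intros [U0 [HU0 HZ]].
    pose proof (zero_meas U U0 HU0) as HZm. unfold cyl_sigma in HZm.
    split.
    + destruct HU0 as [e He].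
      exists (fun n x => match Cantor.of_nat n with
                         | (a, O) => zero_preimage U0 x
                         | (a, S k) => match e a with
                                      | None => zero_preimage U0 x
                                      | Some u => / INR (S k) < Rabs (x u) end end).
      split; [|split].
      * intro n. destruct (Cantor.of_nat n) as [a [|k]]; auto.
        destruct (e a) as [u|]; auto.
        apply (cyl_meas U u (fun r => / INR (S k) < Rabs r)), borel_abs_gt.
      * intro n. destruct (Cantor.of_nat n) as [a [|k]]; eauto.
        destruct (e a) as [u|]; eauto. apply abs_finite; auto.
      * intro x. destruct (classic (zero_preimage U0 x)) as [Hx|Hx].
        -- exists (Cantor.to_nat (0%nat, 0%nat)). rewrite Cantor.cancel_of_to. exact Hx.
        -- unfold zero_preimage in Hx.
           apply not_all_ex_not in Hx. destruct Hx as [u Hu].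
           apply imply_to_and in Hu. destruct Hu as [Hu Hxu].
           apply He in Hu. destruct Hu as [a Ha].
           destruct (archimed_cor1 (Rabs (x u))) as [N [HN1 HN2]].
           { apply Rabs_pos_lt; auto. }
           destruct N as [|k]; [lia|].
           exists (Cantor.to_nat (a, S k)). rewrite Cantor.cancel_of_to. rewrite Ha. exact HN1.
    + intros A HA. exists U0. split; auto.
      rewrite (split_meas _ nu Hnu A (zero_preimage U0) HA HZm).
      replace (nu (fun x => A x /\ zero_preimage U0 x)) with (Fin 0).
      * apply Rbar_plus_0_l.
      * symmetry. apply le_zero.
        -- apply (nu_nonneg _ nu Hnu). apply sg_inter2; auto.
        -- rewrite <- HZ. apply (mono _ nu Hnu); auto. apply sg_inter2; auto. tauto.
  - intros [[E [HEm [HEf HEc]]] H].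
    set (D := fun n x => E n x /\ forall m, (m < n)%nat -> ~ E m x).
    assert (HDm : forall n, cyl_sigma U (D n)).
    { intro n. unfold D. apply sg_inter2; [apply HEm|].
      induction n.
      - apply (sg_ext _ (fun _ => ~ False)). apply sg_compl, sg_empty.
        intro x; split; [intros _ m Hm; lia | tauto].
      - apply (sg_ext _ (fun x => (forall m, (m < n)%nat -> ~ E m x) /\ ~ E n x)).
        + apply sg_diff; [exact IHn|apply HEm].
        + intro x; split.
          * intros [H1 H2] m Hm. destruct (Nat.eq_dec m n) as [->|]; auto. apply H1; lia.
          * intro H1; split; [intros; apply H1; lia|apply H1; lia]. }
    unfold cyl_sigma in HDm.
    assert (HDf : forall n, exists r, nu (D n) = Fin r).
    { intro n. destruct (HEf n) as [r Hr]. apply (finite_of_le _ r). rewrite <- Hr.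
      apply (mono _ nu Hnu); [apply HDm|apply HEm|intros x [Hx _]; exact Hx]. }
    assert (Hn : forall n, exists UA : set U, countable_subset UA /\
                   nu (D n) = nu (fun x => D n x /\ ~ zero_preimage UA x)) by (intro n; apply H; apply HDm).
    set (UA := fun n => proj1_sig (constructive_indefinite_description _ (Hn n))).
    assert (HUA : forall n, countable_subset (UA n) /\
                   nu (D n) = nu (fun x => D n x /\ ~ zero_preimage (UA n) x))
      by (intro n; exact (proj2_sig (constructive_indefinite_description _ (Hn n)))).
    set (ee := fun n => proj1_sig (constructive_indefinite_description _ (proj1 (HUA n)))).
    assert (Hee : forall n u, UA n u <-> exists i, ee n i = Some u)
      by (intro n; exact (proj2_sig (constructive_indefinite_description _ (proj1 (HUA n))))).
    set (U0 := fun u => exists n, UA n u).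
    assert (HU0 : countable_subset U0).
    { exists (fun m => let (n, i) := Cantor.of_nat m in ee n i).
      intro u; split.
      - intros [n Hu]. apply Hee in Hu. destruct Hu as [i Hi].
        exists (Cantor.to_nat (n, i)). rewrite Cantor.cancel_of_to. exact Hi.
      - intros [m Hm]. destruct (Cantor.of_nat m) as [n i]. exists n. apply Hee. eauto. }
    exists U0. split; auto.
    pose proof (zero_meas U U0 HU0) as HZ0. unfold cyl_sigma in HZ0.
    assert (Hz : forall n, nu (fun x => D n x /\ zero_preimage U0 x) = Fin 0).
    { intro n.
      assert (Hc : countable_subset (UA n)) by apply HUA.
      pose proof (zero_meas U (UA n) Hc) as HZn. unfold cyl_sigma in HZn.
      assert (Hn0 : nu (fun x => D n x /\ zero_preimage (UA n) x) = Fin 0).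
      { destruct (HDf n) as [d Hd].
        pose proof (split_meas _ nu Hnu (D n) (zero_preimage (UA n)) (HDm n) HZn) as Hs.
        rewrite <- (proj2 (HUA n)) in Hs. rewrite Hd in Hs.
        apply (fin_sum_zero _ d); auto.
        apply (nu_nonneg _ nu Hnu). apply sg_inter2; auto. }
      apply le_zero.
      - apply (nu_nonneg _ nu Hnu). apply sg_inter2; auto.
      - rewrite <- Hn0. apply (mono _ nu Hnu); try (apply sg_inter2; auto).
        intros x [Hx1 Hx2]. split; auto. intros u Hu. apply Hx2. exists n; auto. }
    destruct Hnu as [_ [_ Hc]].
    specialize (Hc (fun n x => D n x /\ zero_preimage U0 x)).
    assert (Eq : (fun x => exists n, D n x /\ zero_preimage U0 x) = zero_preimage U0).
    { apply set_ext; intro x; split.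
      - intros [n [_ Hx]]; auto.
      - intro Hx. destruct (HEc x) as [n Hn'].
        assert (forall n, E n x -> exists m, D m x).
        { intro k. induction k as [k IH] using (well_founded_induction lt_wf).
          intro Hk. destruct (classic (forall m, (m < k)%nat -> ~ E m x)) as [Hall|Hall].
          - exists k. split; auto.
          - apply not_all_ex_not in Hall. destruct Hall as [m Hm].
            apply imply_to_and in Hm. destruct Hm as [Hm1 Hm2].
            apply (IH m Hm1). apply NNPP; auto. }
        destruct (H0 n Hn') as [m Hm]. exists m; auto. }
    cbv beta in Hc. rewrite Eq in Hc.
    apply (series_zero _ _ Hz). apply Hc.
    + intro n; apply sg_inter2; auto.
    + intros n m Hnm x [[Hn1 Hn2] _] [[Hm1 Hm2] _].
      destruct (Nat.lt_total n m) as [Hl|[Hl|Hl]].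
      * apply (Hm2 n Hl Hn1).
      * auto.
      * apply (Hn2 m Hl Hm1).
Qed.
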